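(* Consider real variables $a_i,b_i,c_i,d_i$, $i=1,\dots,6$, subject to the linear relations \[c_1+b_1=c_2+b_2=c_3+b_3,\qquad -a_1+d_1=-a_2+d_2=-a_3+d_3,\] \[(a_{j+3},b_{j+3},c_{j+3},d_{j+3})=(-b_j,a_j,-d_j,c_j)\quad(j=1,2,3).\] For a constant $C$ let $P_i^{C}\coloneqq b_ic_i-a_id_i+C(a_i^2+c_i^2)$ and, for parameters $x,y,w$, let $P_{(x,y,w)}\coloneqq x(P_1^C+P_4^C)+y(P_2^C+P_5^C)+w(P_3^C+P_6^C)$. Define the complex-valued linear function \[Y_{(x,y,w)}\coloneqq(c_1+b_1)+x(-c_1+b_1)+y(-c_2+b_2)+w(-c_3+b_3)+i\big((-a_1+d_1)+x(-a_1-d_1)+y(-a_2-d_2)+w(-a_3-d_3)\big).\] Let $\alpha,\beta,\gamma\ge0$ with $\alpha+\beta+\gamma<1$, and for $0\le\lambda\le1$ let $K_\lambda\coloneqq\ker(Y_{(\lambda\alpha,\lambda\beta,\lambda\gamma)})$ (both real and imaginary parts vanish), a subspace of the space of variables satisfying the relations above. Then: (1) If $\alpha,\beta,\gamma>0$ and $0<C<1-(\alpha+\beta+\gamma)$, then $P_{(\alpha,\beta,\gamma)}$ is negative definite on $K_\lambda$ for all $0\le\lambda\le1$. (2) If $\alpha,\beta>0$, $\gamma=0$, and $C,\gamma'>0$ satisfy $0<C<1-(\alpha+\beta+\gamma')$, then $P_{(\alpha,\beta,\gamma')}$ is negative definite on $K_\lambda$ for all $0\le\lambda\le1$. (3) If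 $\alpha>0$, $\beta=\gamma=0$, and $C,\beta',\gamma'>0$ satisfy $0<C<1-(\alpha+\beta'+\gamma')$, then $P_{(\alpha,\beta',\gamma')}$ is negative definite on $K_\lambda$ for all $0\le\lambda\le1$. *)

(* Defs.v *)
From HB Require Import structures.
From mathcomp Require Import all_boot all_order all_algebra.
From mathcomp Require Import reals.
Set Implicit Arguments. Unset Strict Implicit. Unset Printing Implicit Defensive.
Import Order.TTheory GRing.Theory Num.Theory.
Local Open Scope ring_scope.

Section Defs.
Variable R : realType.

(* Variables a_i, b_i, c_i, d_i are given as functions nat -> R; only the
   indices i = 1..6 are meaningful (other values are ignored). *)

Definition relations (a b c d : nat -> R) : Prop :=
  [/\ c 1%N + b 1%N = c 2%N + b 2%N,
      c 2%N + b 2%N = c 3%N + b 3%N,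
      - a 1%N + d 1%N = - a 2%N + d 2%N,
      - a 2%N + d 2%N = - a 3%N + d 3%N &
      forall j : nat, (1 <= j <= 3)%N ->
        [/\ a (j + 3)%N = - b j, b (j + 3)%N = a j,
            c (j + 3)%N = - d j & d (j + 3)%N = c j]].

Definition Pi (C : R) (a b c d : nat -> R) (i : nat) : R :=
  b i * c i - a i * d i + C * (a i ^+ 2 + c i ^+ 2).

Definition Pxyw (C x y w : R) (a b c d : nat -> R) : R :=
  x * (Pi C a b c d 1 + Pi C a b c d 4)
  + y * (Pi C a b c d 2 + Pi C a b c d 5)
  + w * (Pi C a b c d 3 + Pi C a b c d 6).

Definition Yre (x y w : R) (a b c d : nat -> R) : R :=
  (c 1%N + b 1%N) + x * (- c 1%N + b 1%N) + y * (- c 2%N + b 2%N)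
  + w * (- c 3%N + b 3%N).

Definition Yim (x y w : R) (a b c d : nat -> R) : R :=
  (- a 1%N + d 1%N) + x * (- a 1%N - d 1%N) + y * (- a 2%N - d 2%N)
  + w * (- a 3%N - d 3%N).

Definition inK (x y w : R) (a b c d : nat -> R) : Prop :=
  relations a b c d /\ Yre x y w a b c d = 0 /\ Yim x y w a b c d = 0.

Definition nonzero_vars (a b c d : nat -> R) : Prop :=
  exists i : nat, (1 <= i <= 6)%N /\
    (a i != 0 \/ b i != 0 \/ c i != 0 \/ d i != 0).

Definition negdef_on_K (C x' y' w' x y w : R) : Prop :=
  forall a b c d : nat -> R, inK x y w a b c d -> nonzero_vars a b c d ->
    Pxyw C x' y' w' a b c d < 0.

End Defs.

(* Main.v *)
Require Import Defs.
From HB Require Import structures.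
From mathcomp Require Import all_boot all_order all_algebra.
From mathcomp Require Import reals ring lra.
Import Order.TTheory GRing.Theory Num.Theory.
Local Open Scope ring_scope.

Lemma cs3 (R : realType) (e1 e2 e3 x1 x2 x3 : R) : 0 <= e1 -> 0 <= e2 -> 0 <= e3 ->
  (e1*x1 + e2*x2 + e3*x3)^+2 <= (e1+e2+e3)*(e1*x1^+2 + e2*x2^+2 + e3*x3^+2).
Proof.
move=> h1 h2 h3; rewrite -subr_ge0.
have -> : (e1+e2+e3)*(e1*x1^+2 + e2*x2^+2 + e3*x3^+2) - (e1*x1 + e2*x2 + e3*x3)^+2
  = e1*e2*(x1-x2)^+2 + e1*e3*(x1-x3)^+2 + e2*e3*(x2-x3)^+2 by ring.
by rewrite !addr_ge0 // mulr_ge0 ?sqr_ge0 // mulr_ge0.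
Qed.

Lemma bnd (R : realType) (e1 e2 e3 w1 w2 w3 lam s x1 x2 x3 : R) :
  0 <= e1 -> 0 <= e2 -> 0 <= e3 -> e1 <= w1 -> e2 <= w2 -> e3 <= w3 ->
  0 <= lam -> lam <= 1 -> s = - (lam * (e1*x1 + e2*x2 + e3*x3)) ->
  s^+2 <= (w1+w2+w3)*(w1*x1^+2 + w2*x2^+2 + w3*x3^+2).
Proof.
move=> h1 h2 h3 g1 g2 g3 l0 l1 ->.
set E := e1*x1 + e2*x2 + e3*x3.
have hc := @cs3 R e1 e2 e3 x1 x2 x3 h1 h2 h3.
have s1 : (- (lam * E))^+2 <= E^+2.
  rewrite sqrrN exprMn -[X in _ <= X]mul1r ler_wpM2r ?sqr_ge0 //.
  by rewrite expr_le1.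
apply: (le_trans s1); apply: (le_trans hc).
apply: ler_pM; first by lra.
- by rewrite !addr_ge0 // mulr_ge0 ?sqr_ge0.
- by lra.
have q1 := sqr_ge0 x1; have q2 := sqr_ge0 x2; have q3 := sqr_ge0 x3.
by rewrite !lerD ?ler_wpM2r.
Qed.

Lemma zsq (R : realType) (w x : R) : 0 < w -> w * x^+2 <= 0 -> x = 0.
Proof.
move=> wp h; have : w * x^+2 == 0 by rewrite eq_le h mulr_ge0 ?sqr_ge0 ?ltW.
by rewrite mulf_eq0 sqrf_eq0 gt_eqF //= => /eqP.
Qed.

Lemma core (R : realType) (C w1 w2 w3 e1 e2 e3 lam : R) :
  0 < w1 -> 0 < w2 -> 0 < w3 ->
  0 <= e1 -> 0 <= e2 -> 0 <= e3 -> e1 <= w1 -> e2 <= w2 -> e3 <= w3 ->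
  0 < C -> C < 1 - (w1 + w2 + w3) -> 0 <= lam -> lam <= 1 ->
  negdef_on_K C w1 w2 w3 (lam * e1) (lam * e2) (lam * e3).
Proof.
move=> w1p w2p w3p e1p e2p e3p e1w e2w e3w Cp CS l0 l1 a b c d.
move=> [[r1 r2 r3 r4 rj] [Hre Him]] Hnz.
have [h41 h42 h43 h44] : [/\ a 4%N = - b 1%N, b 4%N = a 1%N, c 4%N = - d 1%N & d 4%N = c 1%N]
  := rj 1%N erefl.
have [h51 h52 h53 h54] : [/\ a 5%N = - b 2%N, b 5%N = a 2%N, c 5%N = - d 2%N & d 5%N = c 2%N]
  := rj 2%N erefl.
have [h61 h62 h63 h64] : [/\ a 6%N = - b 3%N, b 6%N = a 3%N, c 6%N = - d 3%N & d 6%N = c 3%N]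
  := rj 3%N erefl.
move: Hre Him; rewrite /Pxyw /Pi /Yre /Yim h41 h42 h43 h44 h51 h52 h53 h54 h61 h62 h63 h64.
set s := c 1%N + b 1%N.
set t := - a 1%N + d 1%N.
move=> Hre Him.
set S := w1 + w2 + w3.
set Qp := w1 * (b 1%N - c 1%N)^+2 + w2 * (b 2%N - c 2%N)^+2 + w3 * (b 3%N - c 3%N)^+2.
set Qq := w1 * (- a 1%N - d 1%N)^+2 + w2 * (- a 2%N - d 2%N)^+2 + w3 * (- a 3%N - d 3%N)^+2.
have Hs : s^+2 <= S * Qp.
  apply: (@bnd R e1 e2 e3 w1 w2 w3 lam s (b 1%N - c 1%N) (b 2%N - c 2%N) (b 3%N - c 3%N) e1p e2p e3p e1w e2w e3w l0 l1).
  rewrite -[LHS]subr0 -{1}Hre /s; ring.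
have Ht : t^+2 <= S * Qq.
  apply: (@bnd R e1 e2 e3 w1 w2 w3 lam t (- a 1%N - d 1%N) (- a 2%N - d 2%N) (- a 3%N - d 3%N) e1p e2p e3p e1w e2w e3w l0 l1).
  rewrite -[LHS]subr0 -{1}Him /t; ring.
have e2' : c 2%N + b 2%N = s by rewrite /s r1.
have e3' : c 3%N + b 3%N = s by rewrite -r2 /s r1.
have f2' : - a 2%N + d 2%N = t by rewrite /t r3.
have f3' : - a 3%N + d 3%N = t by rewrite -r4 /t r3.
have Hid : forall a1 b1 c1 d1 : R,
   (b1 * c1 - a1 * d1 + C * (a1 ^+ 2 + c1 ^+ 2)) +
   (a1 * - d1 - - b1 * c1 + C * ((- b1) ^+ 2 + (- d1) ^+ 2))
   = ((1 + C) * ((c1 + b1)^+2 + (- a1 + d1)^+2)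
      - (1 - C) * ((b1 - c1)^+2 + (- a1 - d1)^+2)) / 2.
  by move=> a1 b1 c1 d1; field; lra.
rewrite !Hid e2' e3' f2' f3' -/s -/t.
have -> : w1 * (((1 + C) * (s ^+ 2 + t ^+ 2) - (1 - C) * ((b 1%N - c 1%N) ^+ 2 + (- a 1%N - d 1%N) ^+ 2)) / 2) +
  w2 * (((1 + C) * (s ^+ 2 + t ^+ 2) - (1 - C) * ((b 2%N - c 2%N) ^+ 2 + (- a 2%N - d 2%N) ^+ 2)) / 2) +
  w3 * (((1 + C) * (s ^+ 2 + t ^+ 2) - (1 - C) * ((b 3%N - c 3%N) ^+ 2 + (- a 3%N - d 3%N) ^+ 2)) / 2)
  = ((1 + C) * S * (s^+2 + t^+2) - (1 - C) * (Qp + Qq)) / 2.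
  by rewrite /S /Qp /Qq; field; lra.
have Qpos : 0 < Qp + Qq.
  rewrite ltNge; apply/negP => HQ.
  move: HQ; rewrite /Qp /Qq => HQ.
  have n1 := sqr_ge0 (b 1%N - c 1%N); have n2 := sqr_ge0 (b 2%N - c 2%N);
  have n3 := sqr_ge0 (b 3%N - c 3%N); have n4 := sqr_ge0 (- a 1%N - d 1%N);
  have n5 := sqr_ge0 (- a 2%N - d 2%N); have n6 := sqr_ge0 (- a 3%N - d 3%N).
  have m1 := mulr_ge0 (ltW w1p) n1; have m2 := mulr_ge0 (ltW w2p) n2;
  have m3 := mulr_ge0 (ltW w3p) n3; have m4 := mulr_ge0 (ltW w1p) n4;
  have m5 := mulr_ge0 (ltW w2p) n5; have m6 := mulr_ge0 (ltW w3p) n6.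
  have p1 : b 1%N - c 1%N = 0 by apply: (@zsq R w1 _ w1p); lra.
  have p2 : b 2%N - c 2%N = 0 by apply: (@zsq R w2 _ w2p); lra.
  have p3 : b 3%N - c 3%N = 0 by apply: (@zsq R w3 _ w3p); lra.
  have q1 : - a 1%N - d 1%N = 0 by apply: (@zsq R w1 _ w1p); lra.
  have q2 : - a 2%N - d 2%N = 0 by apply: (@zsq R w2 _ w2p); lra.
  have q3 : - a 3%N - d 3%N = 0 by apply: (@zsq R w3 _ w3p); lra.
  have p1' : - c 1%N + b 1%N = 0 by rewrite addrC.
  have p2' : - c 2%N + b 2%N = 0 by rewrite addrC.
  have p3' : - c 3%N + b 3%N = 0 by rewrite addrC.
  rewrite p1' p2' p3' q1 q2 q3 !mulr0 !addr0 /s in Hre Him.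
  rewrite /s /t in r1 r2 r3 r4.
  have [A1 B1 C1 D1] : [/\ a 1%N = 0, b 1%N = 0, c 1%N = 0 & d 1%N = 0] by split; lra.
  have [A2 B2 C2 D2] : [/\ a 2%N = 0, b 2%N = 0, c 2%N = 0 & d 2%N = 0] by split; lra.
  have [A3 B3 C3 D3] : [/\ a 3%N = 0, b 3%N = 0, c 3%N = 0 & d 3%N = 0] by split; lra.
  move: Hnz => [i [/andP [hi1 hi6] H]].
  move: i hi1 hi6 H => [|[|[|[|[|[|[|i]]]]]]] //= _ _;
  rewrite ?h41 ?h42 ?h43 ?h44 ?h51 ?h52 ?h53 ?h54 ?h61 ?h62 ?h63 ?h64 ?A1 ?B1 ?C1 ?D1
     ?A2 ?B2 ?C2 ?D2 ?A3 ?B3 ?C3 ?D3 ?oppr0 eqxx; by case=> [|[|[]]].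
clearbody s t Qp Qq.
have S0 : 0 < S by rewrite /S; lra.
have S1 : S < 1 by move: CS; rewrite /S; lra.
have CS' : C < 1 - S by [].
clearbody S.
have key : (1 + C) * S * S < 1 - C.
  have k1 : (1 + C) * (S * S) < (2 - S) * (S * S).
   rewrite ltr_pM2r ?mulr_gt0 //; lra.
  have k2 : (2 - S) * (S * S) <= S.
    have : 0 <= S * (S - 1)^+2 by rewrite mulr_ge0 ?sqr_ge0 // ltW.
    have -> : S * (S - 1)^+2 = S - (2 - S) * (S * S) by ring.
    by rewrite subr_ge0.
  rewrite -mulrA; lra.
rewrite pmulr_llt0 ?invr_gt0 ?ltr0n //.
rewrite subr_lt0.
apply: (le_lt_trans (y := (1 + C) * S * (S * (Qp + Qq)))).
  rewrite ler_wpM2l //; first by apply: mulr_ge0; lra.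
  by rewrite mulrDr lerD.
by rewrite mulrA ltr_pM2r.
Qed.

Theorem proposition8p9 (R : realType) (alpha beta gamma : R) :
  0 <= alpha -> 0 <= beta -> 0 <= gamma -> alpha + beta + gamma < 1 ->
  [/\
   (* (1) *)
   (0 < alpha -> 0 < beta -> 0 < gamma ->
    forall C : R, 0 < C -> C < 1 - (alpha + beta + gamma) ->
    forall lam : R, 0 <= lam -> lam <= 1 ->
      negdef_on_K C alpha beta gamma (lam * alpha) (lam * beta) (lam * gamma)),
   (* (2) *)
   (0 < alpha -> 0 < beta -> gamma = 0 ->
    forall C gamma' : R, 0 < C -> 0 < gamma' ->
    C < 1 - (alpha + beta + gamma') ->
    forall lam : R, 0 <= lam -> lam <= 1 ->
      negdef_on_K C alpha beta gamma' (lam * alpha) (lam * beta) (lam * gamma))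
  &
   (* (3) *)
   (0 < alpha -> beta = 0 -> gamma = 0 ->
    forall C beta' gamma' : R, 0 < C -> 0 < beta' -> 0 < gamma' ->
    C < 1 - (alpha + beta' + gamma') ->
    forall lam : R, 0 <= lam -> lam <= 1 ->
      negdef_on_K C alpha beta' gamma' (lam * alpha) (lam * beta) (lam * gamma))].
Proof.
move=> a0 b0 g0 _; split.
- move=> ap bp gp C Cp CS lam l0 l1.
  exact: (@core R C alpha beta gamma alpha beta gamma lam ap bp gp a0 b0 g0
            (lexx alpha) (lexx beta) (lexx gamma) Cp CS l0 l1).
- move=> ap bp -> C g' Cp gp CS lam l0 l1.
  exact: (@core R C alpha beta g' alpha beta 0 lam ap bp gp a0 b0 (lexx 0)
            (lexx alpha) (lexx beta) (ltW gp) Cp CS l0 l1).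
- move=> ap -> -> C b' g' Cp bp gp CS lam l0 l1.
  exact: (@core R C alpha b' g' alpha 0 0 lam ap bp gp a0 (lexx 0) (lexx 0)
            (lexx alpha) (ltW bp) (ltW gp) Cp CS l0 l1).
Qed.
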